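(* An algebra $(S,\sqcup,\cap)$ with two binary operations is an ado-semilattice if and only if: (1) $(S,\sqcup)$ is a left regular band; (2) $\cap$ is the semilattice meet with respect to the partial order $\leq$ given by $a\leq b$ iff $a\sqcup b=b$; (3) $a\sqcup(b\cap c)=(a\sqcup b)\cap(a\sqcup c)$ for all $a,b,c$; (4) $a\cap c\leq(a\cap b)\sqcup c$ for all $a,b,c$.
   Context: An o-semilattice is an algebra $(L,\cap,\sqcup)$ such that $(L,\cap)$ is a semilattice and, with $x\leq y$ iff $x=x\cap y$, for all $x,y,z$: (i) $x\leq x\sqcup y$; (ii) $(x\cap y)\sqcup(y\cap z)\leq y$; (iii) $x\sqcup y\leq x\sqcup(y\cap(x\sqcup y))$; (iv) $x\cap z\leq(x\cap y)\sqcup z$. It is distributive if $(a\cap d)\sqcup((b\cap d)\cap(c\cap d))=((a\cap d)\sqcup(b\cap d))\cap((a\cap d)\sqcup(c\cap d))$ for all $a,b,c,d$. An ado-semilattice is a distributive o-semilattice in which $\sqcup$ is associative. A left regular band is a set with a binary operation $\sqcup$ satisfying $a\sqcup(b\sqcup c)=(a\sqcup b)\sqcup c$, $a\sqcup a=a$, $a\sqcup b=(a\sqcup b)\sqcup a$; in a left regular band, $a\leq b$ iff $a\sqcup b=b$ defines a partial order. *)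

(* Defs.v *)
Set Implicit Arguments.

Section Defs.
Variable S : Type.
Variables (meet join : S -> S -> S).

Definition is_semilattice : Prop :=
  (forall x y z, meet x (meet y z) = meet (meet x y) z) /\
  (forall x y, meet x y = meet y x) /\
  (forall x, meet x x = x).

Definition meet_le (x y : S) : Prop := x = meet x y.

Definition is_o_semilattice : Prop :=
  is_semilattice /\
  (forall x y, meet_le x (join x y)) /\
  (forall x y z, meet_le (join (meet x y) (meet y z)) y) /\
  (forall x y, meet_le (join x y) (join x (meet y (join x y)))) /\
  (forall x y z, meet_le (meet x z) (join (meet x y) z)).

Definition is_distributive : Prop :=
  forall a b c d,
    join (meet a d) (meet (meet b d) (meet c d)) =
    meet (join (meet a d) (meet b d)) (join (meet a d) (meet c d)).

Definition is_ado_semilattice : Prop :=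
  is_o_semilattice /\ is_distributive /\
  (forall x y z, join x (join y z) = join (join x y) z).

Definition is_left_regular_band : Prop :=
  (forall a b c, join a (join b c) = join (join a b) c) /\
  (forall a, join a a = a) /\
  (forall a b, join a b = join (join a b) a).

Definition join_le (a b : S) : Prop := join a b = b.

Definition meet_is_glb : Prop :=
  forall a b,
    join_le (meet a b) a /\ join_le (meet a b) b /\
    (forall c, join_le c a -> join_le c b -> join_le c (meet a b)).
End Defs.

(* Main.v *)
Require Import Defs.
From Stdlib Require Import Setoid.

Section Fwd.
Variable S : Type.
Variables (join meet : S -> S -> S).
Hypothesis mA : forall x y z, meet x (meet y z) = meet (meet x y) z.
Hypothesis mC : forall x y, meet x y = meet y x.
Hypothesis mI : forall x, meet x x = x.
Hypothesis o1 : forall x y, meet_le meet x (join x y).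
Hypothesis o2 : forall x y z, meet_le meet (join (meet x y) (meet y z)) y.
Hypothesis o3 : forall x y, meet_le meet (join x y) (join x (meet y (join x y))).
Hypothesis o4 : forall x y z, meet_le meet (meet x z) (join (meet x y) z).
Hypothesis jA : forall x y z, join x (join y z) = join (join x y) z.
Hypothesis dist : is_distributive meet join.

Lemma le_anti x y : meet_le meet x y -> meet_le meet y x -> x = y.
Proof. unfold meet_le; intros H1 H2. transitivity (meet x y); [exact H1|]. rewrite mC. symmetry; exact H2. Qed.

Lemma le_trans x y z : meet_le meet x y -> meet_le meet y z -> meet_le meet x z.
Proof. unfold meet_le; intros H1 H2. transitivity (meet x y); [exact H1|].
  transitivity (meet x (meet y z)); [now rewrite <- H2|]. rewrite mA, <- H1. reflexivity. Qed.

Lemma le_refl x : meet_le meet x x.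
Proof. unfold meet_le. now rewrite mI. Qed.

Lemma le_meet x y z : meet_le meet x y -> meet_le meet x z -> meet_le meet x (meet y z).
Proof. unfold meet_le; intros H1 H2. rewrite mA, <- H1. exact H2. Qed.

Lemma meet_l x y : meet_le meet (meet x y) x.
Proof. unfold meet_le. rewrite (mC (meet x y) x), mA, mI. reflexivity. Qed.
Lemma meet_r x y : meet_le meet (meet x y) y.
Proof. unfold meet_le. rewrite <- mA, mI. reflexivity. Qed.

Lemma F1 x y : meet_le meet x y -> join x y = y.
Proof. intro H. apply le_anti.
- pose proof (o2 x y y) as K. rewrite <- H, mI in K. exact K.
- pose proof (o4 y x y) as K. rewrite mI, mC, <- H in K. exact K.
Qed.

Lemma F1' x y : join x y = y -> meet_le meet x y.
Proof. intro H. rewrite <- H. apply o1. Qed.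

Lemma F2 x : join x x = x.
Proof. apply F1, le_refl. Qed.

Lemma F3 x y : join (join x y) x = join x y.
Proof. apply le_anti.
- pose proof (o2 (join x y) (join x y) x) as K. rewrite mI, (mC _ x) in K.
  rewrite <- (o1 x y) in K. exact K.
- apply o1.
Qed.

Lemma F4 x y z : meet_le meet y z -> meet_le meet (join x y) (join x z).
Proof. intro H. apply F1'. rewrite jA, F3, <- jA, (F1 _ _ H). reflexivity. Qed.

Lemma F5 a x : join a (meet x (join a x)) = join a x.
Proof. apply le_anti. apply F4, meet_l. apply o3. Qed.

Lemma F6 a b c : join a (meet b c) = meet (join a b) (join a c).
Proof.
  set (B := join a b). set (C := join a c).
  apply le_anti.
  - apply le_meet; apply F4; [apply meet_l | apply meet_r].
  - assert (aB : meet_le meet a B) by apply o1.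
    assert (aC : meet_le meet a C) by apply o1.
    assert (aBC : meet_le meet a (meet B C)) by (apply le_meet; assumption).
    assert (aC' : a = meet a C) by exact aC.
    assert (aB' : a = meet a B) by exact aB.
    assert (S1 : meet_le meet (meet B C) (join a (meet c B))).
    { pose proof (dist a B c C) as D.
      rewrite <- aC' in D.
      rewrite (F1 _ _ aBC) in D.
      assert (E : join a (meet c C) = C) by (unfold C; apply F5).
      rewrite E in D.
      rewrite <- (mA B C C), mI in D.
      rewrite <- D. apply F4. apply le_meet.
      + apply le_trans with (meet c C). apply meet_r. apply meet_l.
      + apply le_trans with (meet B C). apply meet_l. apply meet_l. }
    pose proof (dist a b c B) as D.
    rewrite <- aB' in D.
    assert (E : join a (meet b B) = B) by (unfold B; apply F5).
    rewrite E in D.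
    eapply le_trans with (join a (meet (meet b B) (meet c B))).
    + rewrite D. apply le_meet. apply meet_l. exact S1.
    + apply F4. apply le_meet.
      * apply le_trans with (meet b B). apply meet_l. apply meet_l.
      * apply le_trans with (meet c B). apply meet_r. apply meet_l.
Qed.
End Fwd.

Section Bwd.
Variable S : Type.
Variables (join meet : S -> S -> S).
Hypothesis jA : forall a b c, join a (join b c) = join (join a b) c.
Hypothesis jI : forall a, join a a = a.
Hypothesis jR : forall a b, join a b = join (join a b) a.
Hypothesis glb : meet_is_glb meet join.
Hypothesis d3 : forall a b c, join a (meet b c) = meet (join a b) (join a c).
Hypothesis c4 : forall a b c, join_le join (meet a c) (join (meet a b) c).

Notation le := (join_le join).

Lemma bref x : le x x.
Proof. apply jI. Qed.
Lemma btr x y z : le x y -> le y z -> le x z.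
Proof. unfold join_le; intros H1 H2. rewrite <- H2, jA, H1. reflexivity. Qed.
Lemma ban x y : le x y -> le y x -> x = y.
Proof. unfold join_le; intros H1 H2. rewrite <- H1, jR, H1. symmetry; exact H2. Qed.
Lemma bml x y : le (meet x y) x. Proof. apply glb. Qed.
Lemma bmr x y : le (meet x y) y. Proof. apply glb. Qed.
Lemma bmg x y z : le z x -> le z y -> le z (meet x y). Proof. apply glb. Qed.

Lemma ble_iff x y : meet_le meet x y <-> le x y.
Proof. unfold meet_le; split; intro H.
- rewrite H. apply bmr.
- apply ban. apply bmg. apply bref. exact H. apply bml.
Qed.

Lemma bsemi : is_semilattice meet.
Proof. split; [|split].
- intros x y z. apply ban; repeat apply bmg.
  all: try (eapply btr; [apply bml|]; first [apply bml | apply bmr | apply bref]).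
  all: try (eapply btr; [apply bmr|]; first [apply bml | apply bmr | apply bref]).
  all: try apply bml. all: try apply bmr.
  all: eapply btr; [apply bmr|]; eapply btr; [apply bml|]; first [apply bml | apply bmr].
- intros x y. apply ban; apply bmg; first [apply bml | apply bmr].
- intros x. apply ban. apply bml. apply bmg; apply bref.
Qed.

Lemma bado : is_ado_semilattice meet join.
Proof.
  split; [|split; [|exact jA]].
  - split; [exact bsemi|]. split; [|split; [|split]].
    + intros x y. apply ble_iff. unfold join_le. rewrite jA, jI. reflexivity.
    + intros x y z. apply ble_iff. unfold join_le.
      rewrite <- jA. rewrite (bml y z : join (meet y z) y = y). apply bmr.
    + intros x y. apply ble_iff. rewrite d3, jA, jI. apply bmg; apply bref.
    + intros x y z. apply ble_iff. apply c4.
  - intros a b c d. apply d3.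
Qed.
End Bwd.

Theorem corollary3p3 (S : Type) (join meet : S -> S -> S) :
  is_ado_semilattice meet join <->
  (is_left_regular_band join /\
   meet_is_glb meet join /\
   (forall a b c, join a (meet b c) = meet (join a b) (join a c)) /\
   (forall a b c, join_le join (meet a c) (join (meet a b) c))).
Proof.
  split.
  - intros [[[mA [mC mI]] [o1 [o2 [o3 o4]]]] [dist jA]].
    assert (G1 : forall x y, meet_le meet x y -> join x y = y)
      by (intros; eapply F1; eassumption).
    assert (G1' : forall x y, join x y = y -> meet_le meet x y)
      by (intros; eapply F1'; eassumption).
    assert (ML : forall x y, meet_le meet (meet x y) x) by (intros; eapply meet_l; eassumption).
    assert (MR : forall x y, meet_le meet (meet x y) y) by (intros; eapply meet_r; eassumption).
    assert (LM : forall x y z, meet_le meet x y -> meet_le meet x z -> meet_le meet x (meet y z))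
      by (intros; eapply le_meet; eassumption).
    split; [|split; [|split]].
    + split; [exact jA|]. split.
      * intros; eapply F2; eassumption.
      * intros a b. symmetry. eapply F3; eassumption.
    + intros a b. split; [|split].
      * apply G1, ML.
      * apply G1, MR.
      * intros c H1 H2. apply G1. apply LM; apply G1'; assumption.
    + intros; eapply F6; eassumption.
    + intros a b c. apply G1. apply o4.
  - intros [[jA [jI jR]] [glb [d3 c4]]]. apply bado; assumption.
Qed.
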